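(* For arbitrary positive integers $m$ and $n$, there exist a finite alphabet $A$, a letter $a\in A$, and languages $K,L\subseteq A^*$ whose syntactic monoids $M$ and $N$ satisfy $|M|=m$ and $|N|=n$, such that, taking $\varphi:A^*\to M$, $u\mapsto u{\sim}_K$ and $\psi:A^*\to N$, $u\mapsto u{\sim}_L$ to be the syntactic homomorphisms, the mapping $\mu_a:A^*\to M\Diamond N$ is surjective.
   Context: The syntactic congruence of $R\subseteq A^*$ is $u\sim_R v$ iff for all $p,q\in A^*$, $puq\in R\Leftrightarrow pvq\in R$; the syntactic monoid is $A^*/{\sim_R}$. For finite monoids $M,N$, the Schützenberger product $M\Diamond N$ is the set of $2\times2$ matrices $P$ with $P_{1,1}\in M$, $P_{2,2}\in N$, $P_{2,1}=\emptyset$, $P_{1,2}\subseteq M\times N$, with multiplication $(PQ)_{1,1}=P_{1,1}Q_{1,1}$, $(PQ)_{2,2}=P_{2,2}Q_{2,2}$, $(PQ)_{1,2}=\{(P_{1,1}x,y)\mid (x,y)\in Q_{1,2}\}\cup\{(z,tQ_{2,2})\mid (z,t)\in P_{1,2}\}$. Given homomorphisms $\varphi:A^*\to M$, $\psi:A^*\to N$ and $a\in A$, the homomorphism $\mu_a:A^*\to M\Diamond N$ is defined by $(\mu_a(u))_{1,1}=\varphi(u)$, $(\mu_a(u))_{2,2}=\psi(u)$, $(\mu_a(u))_{1,2}=\{(\varphi(u'),\psi(u''))\mid u=u'au'',\ u',u''\in A^*\}$. *)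

(* Defs.v *)
From mathcomp Require Import all_boot.
Set Implicit Arguments. Unset Strict Implicit. Unset Printing Implicit Defensive.

Definition lang (A : finType) := seq A -> Prop.

Definition synt_equiv (A : finType) (R : lang A) (u v : seq A) : Prop :=
  forall p q : seq A, R (p ++ u ++ q) <-> R (p ++ v ++ q).

Definition synt_class (A : finType) (R : lang A) (u : seq A) : seq A -> Prop :=
  fun v => synt_equiv R u v.

Definition synt_monoid (A : finType) (R : lang A) : Type :=
  {C : seq A -> Prop | exists u, C = synt_class R u}.

Definition synt_hom (A : finType) (R : lang A) (u : seq A) : synt_monoid R :=
  exist _ (synt_class R u) (ex_intro _ u erefl).

Definition has_card (T : Type) (k : nat) : Prop :=
  exists f : 'I_k -> T, bijective f.

(* Elements of the Schützenberger product M <> N: 2x2 matrices with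
   (1,1) in M, (2,2) in N, (2,1) empty, (1,2) a subset of M x N. *)
Record schutz (M N : Type) := Schutz {
  s11 : M;
  s22 : N;
  s12 : M * N -> Prop }.

(* Its multiplication (for reference; mu_a below is a homomorphism for it). *)
Definition schutz_mul (M N : Type) (mulM : M -> M -> M) (mulN : N -> N -> N)
  (P Q : schutz M N) : schutz M N :=
  Schutz (mulM (s11 P) (s11 Q)) (mulN (s22 P) (s22 Q))
    (fun z => (exists x y, s12 Q (x, y) /\ z = (mulM (s11 P) x, y))
           \/ (exists x t, s12 P (x, t) /\ z = (x, mulN t (s22 Q)))).

Definition mu (A : finType) (M N : Type) (phi : seq A -> M) (psi : seq A -> N)
  (a : A) (u : seq A) : schutz M N :=
  Schutz (phi u) (psi u)
    (fun z => exists u' u'', u = u' ++ a :: u'' /\ z = (phi u', psi u'')).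

(* Main.v *)
Require Import Defs.
From mathcomp Require Import all_boot all_order all_algebra.
From Stdlib Require Import ClassicalEpsilon FunctionalExtensionality PropExtensionality ProofIrrelevance.
Set Implicit Arguments. Unset Strict Implicit. Unset Printing Implicit Defensive.
Import GRing.Theory.

Section Gen.
Variable A : finType.
Variable R : lang A.

Lemma exist_eq (T : Type) (P : T -> Prop) x y (px : P x) (py : P y) :
  x = y -> exist P x px = exist P y py.
Proof. move=> E; subst; f_equal; apply: proof_irrelevance. Qed.

Lemma se_refl u : synt_equiv R u u. Proof. by []. Qed.
Lemma se_sym u v : synt_equiv R u v -> synt_equiv R v u.
Proof. by move=> E p q; split=> H; apply/E. Qed.
Lemma se_trans u v w : synt_equiv R u v -> synt_equiv R v w -> synt_equiv R u w.
Proof. by move=> E F p q; split=> H; [apply/F/E | apply/E/F]. Qed.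

Lemma class_eq u v : synt_equiv R u v -> synt_class R u = synt_class R v.
Proof.
move=> E; apply: functional_extensionality => w; apply: propositional_extensionality.
rewrite /synt_class; split => H; [exact: se_trans (se_sym E) H | exact: se_trans E H].
Qed.

Lemma hom_eq u v : synt_hom R u = synt_hom R v <-> synt_equiv R u v.
Proof.
split.
- move=> E; have E1 : synt_class R u = synt_class R v by move: E => /(f_equal (@proj1_sig _ _)).
  have : synt_class R u u by apply: se_refl.
  by rewrite E1 => /se_sym.
- by move=> E; apply: exist_eq; apply: class_eq.
Qed.

Lemma synt_surj (x : synt_monoid R) : exists w, x = synt_hom R w.
Proof. by case: x => C [w E]; exists w; subst; apply: exist_eq. Qed.

Lemma card_gen k (h : seq A -> 'I_k) (r : 'I_k -> seq A) :
  (forall u v, synt_equiv R u v <-> h u = h v) -> (forall i, h (r i) = i) ->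
  has_card (synt_monoid R) k.
Proof.
move=> Hh Hr.
pose g (C : synt_monoid R) : 'I_k :=
  h (proj1_sig (constructive_indefinite_description _ (proj2_sig C))).
exists (fun i => synt_hom R (r i)); exists g.
- move=> i; rewrite /g /=.
  case: (constructive_indefinite_description _ _) => w /= E.
  have : synt_class R (r i) (r i) by apply: se_refl.
  by rewrite E => /Hh ->.
- move=> C; rewrite /g.
  case: (constructive_indefinite_description _ _) => w /= E.
  case: C E => C0 pf /= E; subst C0; apply: exist_eq; apply: class_eq.
  by apply/Hh; rewrite Hr.
Qed.
End Gen.

Section Constr.
Variables p q : nat.
Local Open Scope ring_scope.
Definition Alph : finType := option ('I_p.+1 * 'I_q.+1)%type.

Definition phiw (u : seq Alph) : 'I_p.+1 :=
  foldr (fun c acc => (if c is Some xy then xy.1 else 0) + acc) 0 u.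
Definition psiw (u : seq Alph) : 'I_q.+1 :=
  foldr (fun c acc => (if c is Some xy then xy.2 else 0) + acc) 0 u.

Lemma phiw_cat u v : phiw (u ++ v) = phiw u + phiw v.
Proof. by elim: u => [|c u IH] /=; rewrite ?add0r // IH addrA. Qed.
Lemma psiw_cat u v : psiw (u ++ v) = psiw u + psiw v.
Proof. by elim: u => [|c u IH] /=; rewrite ?add0r // IH addrA. Qed.

Definition K : lang Alph := fun u => phiw u = 0.
Definition L : lang Alph := fun u => psiw u = 0.

Lemma K_equiv u v : synt_equiv K u v <-> phiw u = phiw v.
Proof.
split.
- move=> E; have := (E [::] [:: Some (- phiw u, 0)]).1.
  rewrite /K /= !phiw_cat /= !addr0 subrr => /(_ erefl) /eqP.
  by rewrite subr_eq0 => /eqP.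
- by move=> E p' q'; rewrite /K !phiw_cat E.
Qed.
Lemma L_equiv u v : synt_equiv L u v <-> psiw u = psiw v.
Proof.
split.
- move=> E; have := (E [::] [:: Some (0, - psiw u)]).1.
  rewrite /L /= !psiw_cat /= !addr0 subrr => /(_ erefl) /eqP.
  by rewrite subr_eq0 => /eqP.
- by move=> E p' q'; rewrite /L !psiw_cat E.
Qed.

Definition Fac (u : seq Alph) (z : 'I_p.+1 * 'I_q.+1) :=
  exists u' u'', u = u' ++ None :: u'' /\ z = (phiw u', psiw u'').

Lemma fac_single c z : ~ Fac [:: Some c] z.
Proof. by case=> [[|d [|e u1]]] [u''] []. Qed.

Lemma fac_cons c u z : Fac (Some c :: None :: u) z <->
  z = (c.1, psiw u) \/ exists z', Fac u z' /\ z = (c.1 + z'.1, z'.2).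
Proof.
split.
- case=> [[|d [|e u1]]] [u''] [] //=.
  + move=> [<-] E ->; left; by rewrite -E /= !addr0.
  + move=> [<-] <- E ->.
    right; exists (phiw u1, psiw u''); split; first by exists u1, u''.
    by rewrite add0r.
- case=> [->|[z' [[u1 [u'' [-> ->]]] ->]]].
  + by exists [:: Some c], u => /=; rewrite addr0.
  + by exists [:: Some c, None & u1], u'' => /=; rewrite add0r.
Qed.

Lemma build_aux k : forall (l : seq ('I_p.+1 * 'I_q.+1)), size l = k -> forall X Y, exists u,
  phiw u = X /\ psiw u = Y /\ forall z, Fac u z <-> z \in l.
Proof.
elim: k => [|k IH] [|[x0 y0] l] //= Hs X Y.
  exists [:: Some (X, Y)]; rewrite /= !addr0; split => //; split => // z.
  by split => // /fac_single.
case: Hs => Hs.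
have [u [Hx [Hy Hf]]] := IH [seq (z.1 - x0, z.2) | z <- l] (etrans (size_map _ _) Hs) (X - x0) y0.
exists (Some (x0, Y - y0) :: None :: u); rewrite /= Hx Hy add0r.
split; first by rewrite ?add0r addrC subrK.
split; first by rewrite ?add0r subrK.
move=> z0; rewrite fac_cons in_cons /= Hy; split.
- case=> [->|[z' [/Hf /mapP [z1 z1l ->] ->]]]; first by rewrite eqxx.
  by rewrite /= addrC subrK -surjective_pairing z1l orbT.
- case/orP=> [/eqP ->|zl]; first by left.
  right; exists (z0.1 - x0, z0.2); split; first by apply/Hf/mapP; exists z0.
  by rewrite /= addrC subrK -surjective_pairing.
Qed.

Lemma build (l : seq ('I_p.+1 * 'I_q.+1)) X Y : exists u,
  phiw u = X /\ psiw u = Y /\ forall z, Fac u z <-> z \in l.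
Proof. exact: build_aux. Qed.
End Constr.

Definition dec (P : Prop) : bool := if excluded_middle_informative P then true else false.
Lemma decP (P : Prop) : dec P <-> P.
Proof. by rewrite /dec; case: excluded_middle_informative. Qed.

Theorem proposition3 (m n : nat) (hm : 0 < m) (hn : 0 < n) :
  exists (A : finType) (a : A) (K L : lang A),
    has_card (synt_monoid K) m /\ has_card (synt_monoid L) n /\
    (forall P : schutz (synt_monoid K) (synt_monoid L),
       exists u : seq A, mu (synt_hom K) (synt_hom L) a u = P).
Proof.
case: m hm => [//|p] _; case: n hn => [//|q] _.
exists (Alph p q), None, (@K p q), (@L p q).
have HK i w : synt_hom (@K p q) [:: Some (i, 0%R)] = synt_hom (@K p q) w <-> i = phiw w.
  split=> [/hom_eq/K_equiv|E]; first by rewrite /= GRing.addr0.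
  by apply/hom_eq/K_equiv; rewrite /= GRing.addr0.
have HL j w : synt_hom (@L p q) [:: Some (0%R, j)] = synt_hom (@L p q) w <-> j = psiw w.
  split=> [/hom_eq/L_equiv|E]; first by rewrite /= GRing.addr0.
  by apply/hom_eq/L_equiv; rewrite /= GRing.addr0.
split.
  apply: (@card_gen _ _ _ (@phiw p q) (fun i => [:: Some (i, 0%R)])).
    exact: K_equiv.
  by move=> i /=; rewrite GRing.addr0.
split.
  apply: (@card_gen _ _ _ (@psiw p q) (fun j => [:: Some (0%R, j)])).
    exact: L_equiv.
  by move=> j /=; rewrite GRing.addr0.
case=> x y S.
have [wx ->] := synt_surj x; have [wy ->] := synt_surj y.
pose l := [seq z <- enum (predT : pred ('I_p.+1 * 'I_q.+1)) |
  dec (S (synt_hom (@K p q) [:: Some (z.1, 0%R)], synt_hom (@L p q) [:: Some (0%R, z.2)]))].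
have [u [Hx [Hy Hf]]] := build l (phiw wx) (psiw wy).
exists u; rewrite /mu; f_equal.
- by apply/hom_eq/K_equiv.
- by apply/hom_eq/L_equiv.
apply: functional_extensionality => -[c d]; apply: propositional_extensionality.
have [wc ->] := synt_surj c; have [wd ->] := synt_surj d.
split.
- case=> u' [u'' [Eu Ez]].
  have /hom_eq/K_equiv Ec := f_equal fst Ez.
  have /hom_eq/L_equiv Ed := f_equal snd Ez.
  have : (phiw u', psiw u'') \in l by apply/Hf; exists u', u''.
  rewrite mem_filter => /andP [/decP] /=.
  have -> : synt_hom (@K p q) [:: Some (phiw u', 0%R)] = synt_hom (@K p q) wc by apply/HK.
  by have -> : synt_hom (@L p q) [:: Some (0%R, psiw u'')] = synt_hom (@L p q) wd by apply/HL.
- move=> HS.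
  have : (phiw wc, psiw wd) \in l.
    rewrite mem_filter mem_enum andbT; apply/decP => /=.
    have -> : synt_hom (@K p q) [:: Some (phiw wc, 0%R)] = synt_hom (@K p q) wc by apply/HK.
    by have -> : synt_hom (@L p q) [:: Some (0%R, psiw wd)] = synt_hom (@L p q) wd by apply/HL.
  case/Hf => u' [u'' [Eu [Ec Ed]]].
  exists u', u''; split => //; f_equal.
  + by apply/hom_eq/K_equiv.
  + by apply/hom_eq/L_equiv.
Qed.
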